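(* Let $H$ be a real Hilbert space with inner product $\langle\cdot,\cdot\rangle$, let $\mathcal{I}$ be a finite index set, and let $J, g_i : H\to\mathbb{R}$ ($i\in\mathcal{I}$) be $\mathcal{C}^1$ functions. Consider the problem of minimizing $J(u)$ subject to $g_i(u)\le 0$ for all $i\in\mathcal{I}$, with feasible set $\Omega=\{u\in H: g_i(u)\le 0\ \forall i\in\mathcal{I}\}$. Assume that for every $u\in\Omega$ with $I_A(u)\neq\emptyset$ the vectors $\{g_i'(u): i\in I_A(u)\}$ are linearly independent. Then a point $u\in\Omega$ is a KKT point of this problem if and only if $d_A(u)=0$.
   Context: $J'(u)$ and $g_i'(u)$ denote gradients (elements of $H$). For $u\in\Omega$, the active index set is $I_A(u)=\{i\in\mathcal{I}: g_i(u)=0\}$, and $C_A(u)=\{\sum_{i\in I_A(u)} a_i g_i'(u): a_i\ge 0\}$ is the polyhedral cone generated by the active gradients ($C_A(u)=\{0\}$ if $I_A(u)=\emptyset$). For a closed convex set $C\subset H$, $\mathbb{P}_C(v)$ denotes the metric projection of $v$ onto $C$. The correctable steepest descent direction is $d_A(u)=-J'(u)-\mathbb{P}_{C_A(u)}(-J'(u))$. A point $u\in\Omega$ is a KKT point if there exist $\mu_i\ge 0$ ($i\in\mathcal{I}$) with $-J'(u)=\sum_{i\in\mathcal{I}}\mu_i g_i'(u)$ and $\mu_i g_i(u)=0$ for all $i\in\mathcal{I}$. *)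

(* Defs.v *)
From HB Require Import structures.
From mathcomp Require Import all_boot all_order all_algebra.
From mathcomp Require Import all_classical all_reals all_analysis.
Set Implicit Arguments. Unset Strict Implicit. Unset Printing Implicit Defensive.
Import Order.TTheory GRing.Theory Num.Theory.
Import numFieldNormedType.Exports.
Local Open Scope classical_set_scope.
Local Open Scope ring_scope.

(* ip is a (real) inner product inducing the norm of H; together with
   completeness of H this makes (H, ip) a real Hilbert space. *)
Definition is_inner_product (R : realType) (H : normedModType R)
  (ip : H -> H -> R) : Prop :=
  (forall x y, ip x y = ip y x) /\
  (forall (a : R) (x y z : H), ip (a *: x + y) z = a * ip x z + ip y z) /\
  (forall x, ip x x = `|x| ^+ 2).

Definition is_gradient (R : realType) (H : normedModType R)
  (ip : H -> H -> R) (J : H -> R) (J' : H -> H) : Prop :=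
  forall u, differentiable J u /\ forall v, 'd J u v = ip (J' u) v.

Definition C1_with_gradient (R : realType) (H : normedModType R)
  (ip : H -> H -> R) (J : H -> R) (J' : H -> H) : Prop :=
  is_gradient ip J J' /\ continuous J'.

Definition feasible (R : realType) (H : normedModType R) (I : finType)
  (g : I -> H -> R) (u : H) : Prop := forall i, g i u <= 0.

Definition active (R : realType) (H : normedModType R) (I : finType)
  (g : I -> H -> R) (u : H) (i : I) : bool := g i u == 0.

(* C_A(u): cone generated by the active gradients ({0} if no active index) *)
Definition active_cone (R : realType) (H : normedModType R) (I : finType)
  (g : I -> H -> R) (g' : I -> H -> H) (u : H) : set H :=
  [set v | exists a : I -> R, (forall i, 0 <= a i) /\
     v = \sum_(i | active g u i) a i *: g' i u].

(* metric projection onto C: a point of C nearest to v (unique for closed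
   convex C in a Hilbert space); chosen by xget (default v if none exists). *)
Definition metric_proj (R : realType) (H : normedModType R)
  (C : set H) (v : H) : H :=
  xget v [set p | C p /\ forall q, C q -> `|v - p| <= `|v - q|].

Definition dA (R : realType) (H : normedModType R) (I : finType)
  (J' : H -> H) (g : I -> H -> R) (g' : I -> H -> H) (u : H) : H :=
  - J' u - metric_proj (active_cone g g' u) (- J' u).

Definition KKT_point (R : realType) (H : normedModType R) (I : finType)
  (g : I -> H -> R) (J' : H -> H) (g' : I -> H -> H) (u : H) : Prop :=
  feasible g u /\
  exists mu : I -> R, (forall i, 0 <= mu i) /\
    - J' u = \sum_i mu i *: g' i u /\ (forall i, mu i * g i u = 0).

Definition active_lin_indep (R : realType) (H : normedModType R) (I : finType)
  (g : I -> H -> R) (g' : I -> H -> H) (u : H) : Prop :=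
  forall a : I -> R, \sum_(i | active g u i) a i *: g' i u = 0 ->
    forall i, active g u i -> a i = 0.

(* Main.v *)
Require Import Defs.
From HB Require Import structures.
From mathcomp Require Import all_boot all_order all_algebra.
From mathcomp Require Import all_classical all_reals all_analysis.
From mathcomp Require Import lra.
Import Order.TTheory GRing.Theory Num.Theory.
Import numFieldNormedType.Exports.
Local Open Scope classical_set_scope.
Local Open Scope ring_scope.

Module Helpers.
Import ArrowAsProduct.

Lemma Lcont (R : realType) (H : normedModType R) (I : finType) (P : pred I)
  (w : I -> H) :
  continuous (fun a : I -> R => \sum_(i | P i) a i *: w i).
Proof.
suff: forall s, continuous (fun a : I -> R => \sum_(i <- s | P i) a i *: w i) by apply.
elim => [|i s IH] a.
  have -> : (fun a : I -> R => \sum_(i <- [::] | P i) a i *: w i) = fun=> 0.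
    by apply/funext => b; rewrite big_nil.
  exact: cst_continuous.
have -> : (fun a : I -> R => \sum_(j <- i :: s | P j) a j *: w j) =
   (fun a : I -> R => (if P i then a i else 0) *: w i) + (fun a => \sum_(j <- s | P j) a j *: w j).
  apply/funext => b; rewrite big_cons /=; case: (P i); by rewrite ?scale0r ?add0r.
apply: continuousD (IH a).
apply: continuousZr_tmp; case: (P i); first exact: proj_continuous.
exact: cst_continuous.
Qed.

Lemma coercive (R : realType) (H : normedModType R) (I : finType) (P : pred I)
  (w : I -> H) :
  (forall a : I -> R, \sum_(i | P i) a i *: w i = 0 -> forall i, P i -> a i = 0) ->
  exists2 m : R, 0 < m & forall (a : I -> R) j, P j ->
    m * `|a j| <= `|\sum_(i | P i) a i *: w i|.
Proof.
move=> indep.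
case: (pselect (exists j, P j)) => [[j0 Pj0]|noP]; last first.
  by exists 1 => // a j Pj; exfalso; apply: noP; exists j.
pose L := fun a : I -> R => \sum_(i | P i) a i *: w i.
pose Bx := fun (j i : I) => if i == j then [set (1:R)] else
   if P i then [set` `[(-1:R), 1]] else [set (0:R)].
pose K := \big[setU/set0]_(j | P j) [set b : I -> R | forall i, Bx j i (b i)].
have inK : forall b j, P j -> (forall i, Bx j i (b i)) -> K b.
  move=> b j Pj Hb; rewrite /K -bigcup_seq_cond; exists j => //=.
  by rewrite mem_index_enum.
have cK : compact K.
  apply: bigsetU_compact => j _; apply: tychonoff => i; rewrite /Bx.
  case: (i == j); first exact: compact_set1.
  case: (P i); [exact: segment_compact| exact: compact_set1].
have K0 : K !=set0.
  exists (fun i => if i == j0 then 1 else 0); apply: (inK _ j0 Pj0) => i.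
  rewrite /Bx; case: eqP => // _; case: (P i) => //=.
  by rewrite in_itv /= lerN10 ler01.
have fc : {within K, continuous (fun b => `|L b|)}.
  apply: continuous_subspaceT => x.
  exact: (@continuous_comp _ _ _ L (@Num.norm R H) x (@Lcont _ _ _ P w x) (@norm_continuous _ _ (L x))).
have [c cK' cmin] := compact_EVT_min K0 cK fc.
exists `|L c|.
  rewrite normr_gt0; apply/eqP => Lc0.
  move: cK'; rewrite inE /K -bigcup_seq_cond => -[j /= /andP[_ Pj] Hc].
  have := Hc j; rewrite /Bx eqxx /= => c1.
  by have := indep c Lc0 j Pj; rewrite c1; apply/eqP; rewrite oner_eq0.
move=> a j Pj.
have [k Pk tk] := @eq_bigmax _ _ _ 0 j P (fun i => `|a i|) Pj (fun i _ => normr_ge0 (a i)).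
have {}Pk : P k by [].

have ajk : `|a j| <= `|a k|.
  by rewrite -tk; apply: (@le_bigmax_cond _ _ _ 0 j P (fun i => `|a i|)).
have [ak0|ak0] := eqVneq (a k) 0.
  move: ajk; rewrite ak0 normr0 => ajk.
  have -> : `|a j| = 0 by apply/eqP; rewrite eq_le ajk normr_ge0.
  by rewrite mulr0.
pose b := fun i => if P i then a i / a k else 0.
have Kb : K b.
  apply: (inK _ k Pk) => i; rewrite /Bx /b.
  case: eqP => [->|ne]; first by rewrite Pk divff.
  case Pi: (P i) => //=; rewrite in_itv /= -ler_norml normrM normrV ?unitfE //.
  rewrite ler_pdivrMr ?normr_gt0 // mul1r -tk.
  exact: (@le_bigmax_cond _ _ _ 0 i P (fun i => `|a i|)).
have Lb : L b = (a k)^-1 *: L a.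
  rewrite /L scaler_sumr; apply: eq_bigr => i Pi.
  by rewrite /b Pi scalerA mulrC.
have := cmin b (mem_set Kb).
rewrite Lb normrZ normrV ?unitfE // => h.
apply: le_trans (ler_wpM2l (normr_ge0 _) ajk) _.
by rewrite -ler_pdivlMr ?normr_gt0 // mulrC.
Qed.

Lemma proj_exists (R : realType) (H : normedModType R) (I : finType) (P : pred I)
  (w : I -> H) (v : H) :
  (forall a : I -> R, \sum_(i | P i) a i *: w i = 0 -> forall i, P i -> a i = 0) ->
  exists p, (exists a : I -> R, (forall i, 0 <= a i) /\ p = \sum_(i | P i) a i *: w i)
    /\ forall q, (exists a : I -> R, (forall i, 0 <= a i) /\ q = \sum_(i | P i) a i *: w i) ->
      `|v - p| <= `|v - q|.
Proof.
move=> indep.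
have [m m0 coer] := coercive _ _ _ _ _ indep.
pose L := fun a : I -> R => \sum_(i | P i) a i *: w i.
have L0 : L (fun=> 0) = 0 by rewrite /L big1 // => i _; rewrite scale0r.
pose M := 2 * `|v| / m.
have M0 : 0 <= M by rewrite /M divr_ge0 ?mulr_ge0 // ltW.
have mM : m * M = 2 * `|v| by rewrite /M mulrC divfK // gt_eqF.
pose Bx := fun i : I => if P i then [set` `[(0:R), M]] else [set (0:R)].
pose B := [set a : I -> R | forall i, Bx i (a i)].
have cB : compact B.
  apply: tychonoff => i; rewrite /Bx.
  case: (P i); [exact: segment_compact| exact: compact_set1].
have B0 : B (fun=> 0).
  move=> i; rewrite /Bx; case: (P i) => //=.
  by rewrite in_itv /= lexx M0.
have fc : {within B, continuous (fun b => `|v - L b|)}.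
  apply: continuous_subspaceT => x.
  apply: (@continuous_comp _ _ _ (fun b => v - L b) (@Num.norm R H) x); last first.
    exact: (@norm_continuous _ _ _).
  apply: (@continuousB _ _ _ (fun=> v) L x); first exact: cst_continuous.
  exact: (@Lcont _ _ _ P w x).
have [c cB' cmin] := compact_EVT_min (ex_intro _ _ B0) cB fc.
rewrite inE in cB'.
have Fc : `|v - L c| <= `|v|.
  by have := cmin _ (mem_set B0); rewrite L0 subr0.
exists (L c); split.
  exists c; split => // i; have := cB' i; rewrite /Bx.
  by case: (P i) => /= [|->//]; rewrite in_itv /= => /andP[].
move=> q [a [a0 ->]].
pose a' := fun i => if P i then a i else 0.
have La' : L a' = L a by apply: eq_bigr => i Pi; rewrite /a' Pi.
case: (pselect (exists j, P j && (M < a j))) => [[j /andP[Pj Mj]]|nM].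
  have h1 := coer a j Pj.
  rewrite ger0_norm ?a0 // in h1.
  have h2 : m * M < m * a j by rewrite ltr_pM2l.
  have h3 := ler_normD (L a - v) v.
  rewrite subrK distrC in h3.
  apply: (le_trans Fc).
  rewrite -/(L a) in h1 *.
  lra.
apply: le_trans (cmin a' _) _; last by rewrite La'.
apply: mem_set => i; rewrite /Bx /a'; case Pi: (P i) => //=.
rewrite in_itv /= a0 /=; rewrite leNgt; apply/negP => Mi.
by apply: nM; exists i; rewrite Pi.
Qed.

End Helpers.

Theorem lemma2 (R : realType) (H : completeNormedModType R)
  (ip : H -> H -> R) (I : finType)
  (J : H -> R) (J' : H -> H) (g : I -> H -> R) (g' : I -> H -> H) :
  is_inner_product ip ->
  C1_with_gradient ip J J' ->
  (forall i, C1_with_gradient ip (g i) (g' i)) ->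
  (forall u, feasible g u -> (exists i, active g u i) ->
     active_lin_indep g g' u) ->
  forall u, feasible g u ->
    (KKT_point g J' g' u <-> dA J' g g' u = 0).
Proof.
move=> _ _ _ indepH u fu.
have indep : forall a : I -> R, \sum_(i | active g u i) a i *: g' i u = 0 ->
    forall i, active g u i -> a i = 0.
  by move=> a Ha i Ai; exact: (indepH u fu (ex_intro _ i Ai) a Ha i Ai).
have [p0 Hp0] := Helpers.proj_exists _ _ _ _ _ (- J' u) indep.
rewrite /dA /metric_proj.
case: xgetP => [p _ [Cp minp] | nonep]; last by exfalso; apply: (nonep p0) Hp0.
split.
  case=> _ [mu [mu0 [Hv Hc]]].
  have Cv : active_cone g g' u (- J' u).
    exists mu; split => //; rewrite Hv (bigID (active g u)) /=.
    rewrite [X in _ + X]big1 ?addr0 // => i nAi.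
    have : mu i = 0.
      by move: (Hc i) => /eqP; rewrite mulf_eq0 (negbTE (nAi : ~~ (g i u == 0))) orbF => /eqP.
    by move=> ->; rewrite scale0r.
  have := minp _ Cv; rewrite subrr normr0 => h.
  by apply/eqP; rewrite -normr_le0.
move=> Hd; have pv := subr0_eq Hd.
split => //.
case: Cp => a [a0 Hpa].
exists (fun i => if active g u i then a i else 0); split.
  by move=> i; case: ifP.
split.
  rewrite pv Hpa big_mkcond /=; apply: eq_bigr => i _.
  by case: ifP => _; rewrite ?scale0r.
move=> i; rewrite /active; case: ifP => [/eqP -> | _]; by rewrite ?mulr0 ?mul0r.
Qed.
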